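(* For $i=1,2$ let $L_i=\widehat{\sigma_1^{x_i}\sigma_2^{y_i}[1,3]^{z_i}}$ with integers $x_i,y_i,z_i\ge 0$ and $z_i\equiv 1\pmod 3$. Let $L=\widehat{\sigma_1^{x}\sigma_2^{y}[1,3]^{z}}$ with integers $x,y,z\ge 0$ and $z\equiv 0\pmod 3$. If $V_{L_1}=V_{L_2}$, then $z_1=z_2$ and $x_1+y_1=x_2+y_2$. If $z_1=z_2$ and $x_1+y_1=x_2+y_2$, then $L_1=L_2$. If $V_{L_1}=V_L$, then $\{x,y\}=\{1,1+x_1+y_1\}$ and $z+1=z_1$. If $\{x,y\}=\{1,1+x_1+y_1\}$ and $z+1=z_1$, then $L_1=L$. Hence $L_1$ is the closure of $\sigma_1^{1+x_1+y_1}\sigma_2[1,3]^{z_1-1}$.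
   Context: $B_3$ is the 3-strand braid group with generators $\sigma_1,\sigma_2$; $[1,3]=\sigma_1\sigma_2$; $\widehat\beta$ is the closure. $V_L$ is the Jones polynomial (unknot $=1$, $t^{-1}V_{L_+}-tV_{L_-}=(t^{1/2}-t^{-1/2})V_{L_0}$, $\sigma_i$ a positive crossing). *)

(* Defs.v *)
From HB Require Import structures.
From mathcomp Require Import all_boot all_order all_algebra fraction.
Set Implicit Arguments. Unset Strict Implicit. Unset Printing Implicit Defensive.
Import Order.TTheory GRing.Theory Num.Theory.

(* A braid letter (i, b) denotes sigma_i (b = true) or sigma_i^{-1} (b = false),
   with generator indices i >= 1 (sigma_i crosses strands i and i+1). *)
Definition letter := (nat * bool)%type.
Definition bword := seq letter.

Definition wf_word (n : nat) (w : bword) : bool :=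
  all (fun l : letter => (0 < l.1) && (l.1 < n)) w.

Inductive braid_eq : bword -> bword -> Prop :=
| beq_refl w : braid_eq w w
| beq_sym u w : braid_eq u w -> braid_eq w u
| beq_trans u v w : braid_eq u v -> braid_eq v w -> braid_eq u w
| beq_ctx a b u w : braid_eq u w -> braid_eq (a ++ u ++ b) (a ++ w ++ b)
| beq_inv i b : braid_eq [:: (i, b); (i, ~~ b)] [::]
| beq_far i j b c : (i.+1 < j)%N -> braid_eq [:: (i, b); (j, c)] [:: (j, c); (i, b)]
| beq_braid i : braid_eq [:: (i, true); (i.+1, true); (i, true)]
                         [:: (i.+1, true); (i, true); (i.+1, true)].

(* Isotopy of closed braids, via Markov moves (conjugation, stabilization). *)
Inductive link_eq : nat * bword -> nat * bword -> Prop :=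
| leq_braid n u w : wf_word n u -> wf_word n w -> braid_eq u w ->
    link_eq (n, u) (n, w)
| leq_conj n u w : wf_word n u -> wf_word n w ->
    link_eq (n, u ++ w) (n, w ++ u)
| leq_stab n w b : (0 < n)%N -> wf_word n w ->
    link_eq (n, w) (n.+1, rcons w (n, b))
| leq_sym p q : link_eq p q -> link_eq q p
| leq_trans p q r : link_eq p q -> link_eq q r -> link_eq p r.

(* Coefficients: the field of fractions of Z[s], with s = t^{1/2}. *)
Definition LPoly := {fraction {poly int}}.
Definition s : LPoly := tofrac ('X : {poly int}).

Local Open Scope ring_scope.

(* V is the Jones polynomial on closed braids: invariant under link
   equivalence, unknot = 1, and skein relation at any braid crossing:
   t^{-1} V(L+) - t V(L-) = (t^{1/2} - t^{-1/2}) V(L0). *)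
Definition jones_axioms (V : nat -> bword -> LPoly) : Prop :=
  [/\ (forall n w m u, link_eq (n, w) (m, u) -> V n w = V m u),
      V 1%N [::] = 1 &
      (forall n w1 w2 i, wf_word n (w1 ++ w2) -> (0 < i < n)%N ->
         s ^- 2 * V n (w1 ++ (i, true) :: w2) - s ^+ 2 * V n (w1 ++ (i, false) :: w2)
         = (s - s^-1) * V n (w1 ++ w2))].

(* sigma_1^x sigma_2^y [1,3]^z in B_3, [1,3] = sigma_1 sigma_2 *)
Definition bw3 (x y z : nat) : bword :=
  nseq x (1%N, true) ++ nseq y (2%N, true) ++ flatten (nseq z [:: (1%N, true); (2%N, true)]).

(* Main.v *)
From Pilot Require Import Defs.
From HB Require Import structures.
From mathcomp Require Import all_boot all_order all_algebra fraction.
From mathcomp Require Import ring lra zify.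
Set Implicit Arguments. Unset Strict Implicit. Unset Printing Implicit Defensive.
Import Order.TTheory GRing.Theory Num.Theory.
Local Open Scope ring_scope.



Section Mat.
Variable R : comNzRingType.
Definition mat := (R * R * R * R)%type.
Definition mm (A B : mat) : mat :=
  let: (a,b,c,d) := A in let: (e,f,g,h) := B in
  (a*e+b*g, a*f+b*h, c*e+d*g, c*f+d*h).
Definition mid : mat := (1,0,0,1).
Definition mtr (A : mat) := let: (a,_,_,d) := A in a + d.
Definition rho (a : R) (g : bool) : mat :=
  if g then (a^+3, -a, 0, -a) else (-a, 0, -a^+3, a^+3).
Fixpoint rhoW a (w : seq bool) : mat :=
  if w is g :: w' then mm (rho a g) (rhoW a w') else mid.
Definition Fw a (w : seq bool) :=
  (a^+4+1) * (-a)^+(size w) + a^+2 * mtr (rhoW a w).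

Lemma mmA A B C : mm A (mm B C) = mm (mm A B) C.
Proof.
case: A => [[[a b] c] d]; case: B => [[[e f] g] h]; case: C => [[[i j] k] l].
rewrite /mm; congr (_,_,_,_); ring.
Qed.
Lemma mm1 A : mm mid A = A.
Proof. case: A => [[[a b] c] d]; rewrite /mm /mid; congr (_,_,_,_); ring. Qed.

Lemma rhoW_cat a u v : rhoW a (u ++ v) = mm (rhoW a u) (rhoW a v).
Proof. elim: u => [|g u IH]; first by symmetry; exact: mm1. by rewrite /= IH mmA. Qed.

Lemma FQ a u v g : Fw a (u ++ g :: g :: v) =
  (a^+3 - a) * Fw a (u ++ g :: v) + a^+4 * Fw a (u ++ v).
Proof.
rewrite /Fw !rhoW_cat /= !size_cat /=.
case: (rhoW a u) => [[[p1 p2] p3] p4]; case: (rhoW a v) => [[[q1 q2] q3] q4].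
rewrite !addnS !exprS.
case: g; rewrite /mm /mtr /=; ring.
Qed.

Lemma FB a u v : Fw a (u ++ [:: false; true; false] ++ v) =
  Fw a (u ++ [:: true; false; true] ++ v).
Proof.
rewrite /Fw !rhoW_cat /= !size_cat /=.
case: (rhoW a u) => [[[p1 p2] p3] p4]; case: (rhoW a v) => [[[q1 q2] q3] q4].
rewrite /mm /mtr /=; ring.
Qed.

Definition mmap S (f : R -> S) (A : mat) : (S*S*S*S)%type :=
  let: (a,b,c,d) := A in (f a, f b, f c, f d).
End Mat.

Lemma Fw_morph (R S : comNzRingType) (f : {rmorphism R -> S}) a w :
  f (Fw a w) = Fw (f a) w.
Proof.
rewrite /Fw.
have H : forall w, mmap f (rhoW a w) = rhoW (f a) w.
  elim=> [|g u IH] /=; first by rewrite /mmap /mid /= rmorph0 rmorph1.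
  rewrite -IH; case: (rhoW a u) => [[[p1 p2] p3] p4].
  case: g; rewrite /mm /mmap /= !rmorphD !rmorphM ?rmorphN ?rmorphXn ?rmorph0 //.
rewrite -H; case: (rhoW a w) => [[[p1 p2] p3] p4] /=.
by rewrite !(rmorphD, rmorphM, rmorphXn, rmorphN, rmorph1) expr2.
Qed.



Definition lt3 (g : bool) : letter := ((if g then 1 else 2)%N, true).
Definition enc (w : seq bool) : bword := map lt3 w.

Lemma s_neq0 : s != 0.
Proof. by rewrite /s tofrac_eq0 polyX_eq0. Qed.

Lemma skein_solve_gen (F : fieldType) (x A B C : F) : x != 0 ->
  x^-2 * A - x^+2 * B = (x - x^-1) * C -> A = x^+4 * B + (x^+3 - x) * C.
Proof.
move=> h E.
have -> : A = x^+2 * (x^-2 * A) by rewrite mulrA mulfV ?mul1r // expf_neq0.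
have -> : x^-2 * A = (x - x^-1) * C + x^+2 * B by rewrite -E; ring.
by field.
Qed.

Lemma skein_solve (A B C : LPoly) :
  s^-2 * A - s^+2 * B = (s - s^-1) * C -> A = s^+4 * B + (s^+3 - s) * C.
Proof. exact: skein_solve_gen s_neq0. Qed.

Lemma wf3_enc w : wf_word 3 (enc w).
Proof. by elim: w => [|[] w IH] //=. Qed.

Lemma wf_cat n u v : wf_word n (u ++ v) = wf_word n u && wf_word n v.
Proof. by rewrite /wf_word all_cat. Qed.

Lemma VQ (V : nat -> bword -> LPoly) (HV : jones_axioms V) u v g :
  V 3%N (enc (u ++ g :: g :: v)) =
  (s^+3 - s) * V 3%N (enc (u ++ g :: v)) + s^+4 * V 3%N (enc (u ++ v)).
Proof.
case: HV => Hl _ Hs.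
have Hi : (0 < (if g then 1 else 2) < 3)%N by case: (g).
have Hw : wf_word 3 ((enc u ++ [:: lt3 g]) ++ enc v).
  by rewrite !wf_cat !wf3_enc; case: (g).
have E := Hs 3%N _ _ _ Hw Hi.
have E1 : ((enc u ++ [:: lt3 g]) ++ ((if g then 1 else 2)%N, true) :: enc v)
   = enc (u ++ g :: g :: v) by rewrite /enc map_cat -catA.
have E2 : V 3%N ((enc u ++ [:: lt3 g]) ++ ((if g then 1 else 2)%N, false) :: enc v)
   = V 3%N (enc (u ++ v)).
  apply: Hl; rewrite /enc map_cat -catA /=.
  apply: leq_braid.
  - by rewrite !wf_cat /= -!/(enc _) !wf3_enc; case: (g).
  - by rewrite !wf_cat -!/(enc _) !wf3_enc.
  - exact: (beq_ctx (map lt3 u) (map lt3 v) (beq_inv (if g then 1 else 2)%N true)).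
have E3 : V 3%N ((enc u ++ [:: lt3 g]) ++ enc v) = V 3%N (enc (u ++ g :: v)).
  by rewrite /enc map_cat -catA.
rewrite E1 E2 E3 in E.
by rewrite (skein_solve E) addrC.
Qed.

Lemma VB (V : nat -> bword -> LPoly) (HV : jones_axioms V) u v :
  V 3%N (enc (u ++ [:: false; true; false] ++ v)) =
  V 3%N (enc (u ++ [:: true; false; true] ++ v)).
Proof.
case: HV => Hl _ _.
apply: Hl; apply: leq_braid; rewrite ?wf3_enc //.
rewrite /enc !map_cat.
exact: (beq_ctx _ _ (beq_sym (beq_braid 1))).
Qed.



Lemma d_neq0 : s - s^-1 != 0.
Proof.
apply/negP => /eqP H.
have : tofrac ('X ^+ 2 - 1 : {poly int}) == 0.
  rewrite rmorphB rmorphXn rmorph1 -/s.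
  have -> : s ^+ 2 - 1 = s * (s - s^-1) by rewrite mulrBr mulfV ?s_neq0 // expr2.
  by rewrite H mulr0.
rewrite tofrac_eq0 => /eqP H2.
have := congr1 (fun p => p.[0]) H2.
by rewrite !hornerE.
Qed.

Lemma solve1 (F : fieldType) (x C : F) : x - x^-1 != 0 -> x != 0 ->
  x^-2 * 1 - x^+2 * 1 = (x - x^-1) * C -> C = -(x + x^-1).
Proof. move=> hd h E; apply: (mulfI hd); rewrite -E; field. by []. Qed.

Lemma solve2 (F : fieldType) (x C : F) : x - x^-1 != 0 -> x != 0 ->
  x^-2 * (-(x + x^-1)) - x^+2 * (-(x + x^-1)) = (x - x^-1) * C -> C = (-(x + x^-1))^+2.
Proof. move=> hd h E; apply: (mulfI hd); rewrite -E; field. by []. Qed.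

Lemma base_gen (F : fieldType) (x : F) : x != 0 ->
  [/\ x^+2 * (-(x+x^-1))^+2 = Fw x [::], x^+2 * (-(x+x^-1)) = Fw x [:: true],
      x^+2 * (-(x+x^-1)) = Fw x [:: false], x^+2 * 1 = Fw x [:: true; false] &
      x^+2 * (x^+4 * (-(x+x^-1)) + (x^+3 - x) * 1) = Fw x [:: true; false; true]]
  /\ x^+2 * 1 = Fw x [:: false; true].
Proof.
move=> h; rewrite /Fw /=; split; [split|]; field; by [].
Qed.



Section Base.
Variable V : nat -> bword -> LPoly.
Hypothesis HV : jones_axioms V.

Let Hl : forall n w m u, link_eq (n, w) (m, u) -> V n w = V m u.
Proof. by case: HV. Qed.
Let Hs := let: And3 _ _ h := HV in h.

Local Notation dl := (-(s + s^-1)).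

Lemma v2s b : V 2 [:: (1%N, b)] = 1.
Proof.
case: HV => _ h1 _; rewrite -h1; symmetry; apply: Hl.
exact: (@leq_stab 1 [::] b).
Qed.

Lemma v2e : V 2 [::] = dl.
Proof.
have := Hs (n:=2) (w1:=[::]) (w2:=[::]) (i:=1) isT isT.
rewrite /= !v2s => E.
exact: (solve1 d_neq0 s_neq0 E).
Qed.

Lemma v3s2 b : V 3 [:: (2%N, b)] = dl.
Proof. rewrite -v2e; symmetry; apply: Hl; exact: (@leq_stab 2 [::] b). Qed.

Lemma v3e : V 3 [::] = dl ^+ 2.
Proof.
have := Hs (n:=3) (w1:=[::]) (w2:=[::]) (i:=2) isT isT.
rewrite /= !v3s2 => E.
exact: (solve2 d_neq0 s_neq0 E).
Qed.

Lemma v3s12 b : V 3 [:: (1%N, true); (2%N, b)] = 1.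
Proof.
rewrite -(v2s true); symmetry; apply: Hl; exact: (@leq_stab 2 [:: (1%N,true)] b).
Qed.

Lemma v3s1 : V 3 [:: (1%N, true)] = dl.
Proof.
have := Hs (n:=3) (w1:=[:: (1%N,true)]) (w2:=[::]) (i:=2) isT isT.
rewrite /= !v3s12 => E.
exact: (solve1 d_neq0 s_neq0 E).
Qed.

Lemma v3s21 : V 3 [:: (2%N, true); (1%N, true)] = 1.
Proof.
rewrite -(v3s12 true); symmetry; apply: Hl.
exact: (@leq_conj 3 [:: (1%N,true)] [:: (2%N,true)]).
Qed.

Lemma v2s11 : V 2 [:: (1%N, true); (1%N, true)] = s^+4 * dl + (s^+3 - s) * 1.
Proof.
have := Hs (n:=2) (w1:=[:: (1%N,true)]) (w2:=[::]) (i:=1) isT isT.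
rewrite /= v2s.
have -> : V 2 [:: (1%N, true); (1%N, false)] = V 2 [::].
  apply: Hl; apply: leq_braid => //.
  exact: (beq_inv 1 true).
rewrite v2e => E.
exact: (skein_solve E).
Qed.

Lemma v3s121 : V 3 [:: (1%N, true); (2%N, true); (1%N, true)] = s^+4 * dl + (s^+3 - s) * 1.
Proof.
rewrite -v2s11.
have -> : V 3 [:: (1%N, true); (2%N, true); (1%N, true)] = V 3 [:: (1%N, true); (1%N, true); (2%N, true)].
  apply: Hl; exact: (@leq_conj 3 [:: (1%N,true); (2%N,true)] [:: (1%N,true)]).
symmetry; apply: Hl; exact: (@leq_stab 2 [:: (1%N,true); (1%N,true)] true).
Qed.

Definition EE w b := s^+2 * V 3 (enc (b ++ w)) = Fw s (b ++ w).

Lemma comb (V1 V0 F1 F0 : LPoly) : s^+2 * V1 = F1 -> s^+2 * V0 = F0 ->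
  s^+2 * ((s^+3 - s) * V1 + s^+4 * V0) = (s^+3 - s) * F1 + s^+4 * F0.
Proof. by move=> <- <-; ring. Qed.

Lemma mainE w : [/\ EE w [::], EE w [:: true], EE w [:: false], EE w [:: true; false] &
   EE w [:: true; false; true]] /\ EE w [:: false; true].
Proof.
have [[b0 b1 b2 b3 b5] b4] := base_gen s_neq0.
elim: w => [|g w [[H0 H1 H2 H3 H5] H4]].
  rewrite /EE !cats0 /= v3e v3s1 v3s2 v3s12 v3s21 v3s121.
  by split; [split|].
rewrite /EE; case: g; split; try split.
- exact: H1.
- rewrite (_ : [:: true] ++ true :: w = [::] ++ true :: true :: w); last by [].
  rewrite (VQ HV) FQ; exact: comb H1 H0.
- exact: H4.
- rewrite (_ : [:: true; false] ++ true :: w = [::] ++ [:: true; false; true] ++ w); last by [].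
  exact: H5.
- rewrite (_ : [:: true; false; true] ++ true :: w = [:: true; false] ++ true :: true :: w); last by [].
  rewrite (VQ HV) FQ; exact: comb H5 H3.
- rewrite (_ : [:: false; true] ++ true :: w = [:: false] ++ true :: true :: w); last by [].
  rewrite (VQ HV) FQ; exact: comb H4 H2.
- exact: H2.
- exact: H3.
- rewrite (_ : [:: false] ++ false :: w = [::] ++ false :: false :: w); last by [].
  rewrite (VQ HV) FQ; exact: comb H2 H0.
- rewrite (_ : [:: true; false] ++ false :: w = [:: true] ++ false :: false :: w); last by [].
  rewrite (VQ HV) FQ; exact: comb H3 H1.
- rewrite (_ : [:: true; false; true] ++ false :: w = [:: true] ++ [:: false; true; false] ++ w); last by [].
  rewrite (VB HV) FB.
  rewrite (_ : [:: true] ++ [:: true; false; true] ++ w = [::] ++ true :: true :: (false :: true :: w)); last by [].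
  rewrite (VQ HV) FQ; exact: comb H5 H4.
- rewrite (_ : [:: false; true] ++ false :: w = [::] ++ [:: false; true; false] ++ w); last by [].
  rewrite (VB HV) FB; exact: H5.
Qed.

Lemma V_Fw w : s^+2 * V 3 (enc w) = Fw s w.
Proof. by have [[H _ _ _ _] _] := mainE w. Qed.

End Base.



Lemma V_eq_int (V : nat -> bword -> LPoly) (HV : jones_axioms V) w1 w2 :
  V 3 (enc w1) = V 3 (enc w2) -> Fw (2 : int) w1 = Fw (2 : int) w2.
Proof.
move=> E.
have h1 := V_Fw HV w1; have h2 := V_Fw HV w2.
have t1 := Fw_morph (@tofrac _) 'X w1; have t2 := Fw_morph (@tofrac _) 'X w2.
have e : tofrac (Fw ('X : {poly int}) w1) = tofrac (Fw ('X : {poly int}) w2).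
  rewrite t1 t2 -/s -h1 -h2 E //.
move/eqP: e; rewrite tofrac_eq => /eqP e.
have := congr1 (horner_eval (2 : int)) e.
by rewrite !Fw_morph /= horner_evalE hornerX.
Qed.

Definition wb x y z := nseq x true ++ nseq y false ++ flatten (nseq z [:: true; false]).

Fixpoint uu (x : nat) : int := if x is x'.+1 then 1 - 4 * uu x' else 0.

Lemma uuE x : 5 * uu x = 1 - (-4) ^+ x.
Proof. elim: x => [|x IH] /=; first by []. rewrite exprS mulrBr mulr1 mulrCA IH; ring. Qed.

Lemma rhoW_t x : rhoW (2:int) (nseq x true) = ((-2)^+x * (-4)^+x, (-2)^+x * uu x, 0, (-2)^+x).
Proof.
elim: x => [|x IH] /=; first by [].
rewrite IH /mm /= !exprS; congr (_,_,_,_); ring.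
Qed.

Lemma rhoW_f y : rhoW (2:int) (nseq y false) = ((-2)^+y, 0, (-2)^+y * (4 * uu y), (-2)^+y * (-4)^+y).
Proof.
elim: y => [|y IH] /=; first by [].
rewrite IH /mm /= !exprS; congr (_,_,_,_); ring.
Qed.

Lemma rhoW_D k : rhoW (2:int) (flatten (nseq (3*k) [:: true; false])) = (64^+k * 64^+k, 0, 0, 64^+k * 64^+k).
Proof.
elim: k => [|k IH]; first by [].
have -> : flatten (nseq (3 * k.+1) [:: true; false]) =
  [:: true; false; true; false; true; false] ++ flatten (nseq (3*k) [:: true; false]) by rewrite mulnS.
rewrite rhoW_cat IH.
have -> : rhoW (2:int) [:: true; false; true; false; true; false] = (4096, 0, 0, 4096) by [].
rewrite /mm /= !exprS; congr (_,_,_,_); ring.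
Qed.

Lemma size_wb x y z : size (wb x y z) = (x + y + 2 * z)%N.
Proof.
rewrite /wb !size_cat !size_nseq addnA; congr (_ + _)%N.
by elim: z => [|z IH] //=; rewrite IH mulnS.
Qed.

Definition II x y : int := 4 + 21 * (-4)^+x + 21 * (-4)^+y + 4 * (-4)^+x * (-4)^+y.

Lemma Fw_closed x y k : 25 * Fw (2:int) (wb x y (3*k)) =
  (-2)^+(x+y) * 64^+k * (425 + 4 * 64^+k * II x y).
Proof.
rewrite /Fw /wb !rhoW_cat rhoW_t rhoW_f rhoW_D -/(wb x y (3*k)) size_wb.
rewrite mulnA (_ : (2 * 3 = 6)%N) // exprD exprM (_ : (-2)^+6 = 64 :> int) //.
rewrite !exprD /II /mm /mtr /=.
have hx := uuE x; have hy := uuE y.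
set ux := uu x; set uy := uu y; set X := (-4)^+x; set Y := (-4)^+y.
set A := (-2)^+x; set B := (-2)^+y; set K := 64^+k.
have e : 25 * (ux * uy) = (1 - X) * (1 - Y) by rewrite -hx -hy; ring.
apply/eqP; rewrite -subr_eq0; apply/eqP.
have -> : forall L R : int, L - R = 16 * A * B * K * K * (25 * (ux * uy) - (1 - X) * (1 - Y)) ->
   L - R = 0 by move=> L R ->; rewrite e subrr mulr0.
  by [].
ring.
Qed.



Lemma VAL (a b : nat) (q1 q2 : int) :
  2^+a * (2*q1+1) = 2^+b * (2*q2+1) -> a = b.
Proof.
have key : forall a c (q1 q2 : int), 2^+a * (2*q1+1) = 2^+(a + c) * (2*q2+1) -> c = 0%N.
  move=> a' c p1 p2; rewrite exprD -mulrA => /(mulfI (expf_neq0 _ (isT : (2:int) != 0))).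
  case: c => [//|c]; rewrite exprS -mulrA.
  move: (2 ^+ c * (2 * p2 + 1)) => t E.
  exfalso; lia.
case: (leqP a b) => h E.
  have := key a (b - a)%N q1 q2; rewrite subnKC // => /(_ E) {E}; clear key; lia.
have := key b (a - b)%N q2 q1; rewrite subnKC; last exact: ltnW.
move=> /(_ (esym E)) {E}; clear key; lia.
Qed.

Definition IIside (v x y : nat) : Prop :=
  ((v = 0 /\ (x = 0 \/ y = 0)) \/ (v = 1 /\ x = 0 /\ y = 0) \/
   (v = 2 /\ ((x = 1 /\ y = 1) \/ (2 <= x /\ 2 <= y))) \/
   (v = 4 /\ ((x = 1 /\ 3 <= y) \/ (3 <= x /\ y = 1))))%N.

Lemma II_dec x y : (II x y = 0 /\ ((x = 1 /\ y = 2) \/ (x = 2 /\ y = 1))%N) \/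
  exists v q, II x y = 2^+v * (2*q+1) /\ IIside v x y.
Proof.
rewrite /IIside /II.
case: x => [|[|x]]; case: y => [|[|[|y]]].
- right; exists 1%N, 12; split; [rewrite !expr0; ring | lia].
- right; exists 0%N, (-38); split; [rewrite !expr0 !expr1; ring | lia].
- right; exists 0%N, 212; split; [rewrite !expr0 !exprS expr0; ring | lia].
- right; exists 0%N, (12 - 800 * (-4)^+y); split; [rewrite !expr0 !exprS; ring | lia].
- right; exists 0%N, (-38); split; [rewrite !expr0 !expr1; ring | lia].
- right; exists 2%N, (-13); split; [rewrite !expr1 !exprS expr0; ring | lia].
- left; split; [rewrite !exprS !expr0; ring | lia].
- right; exists 4%N, (-3 - 10 * (-4)^+y); split; [rewrite !exprS expr0; ring | lia].
- right; exists 0%N, (12 + 200 * (-4)^+x); split; [rewrite !exprS !expr0; ring | lia].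
- case: x => [|x].
  + left; split; [rewrite !exprS !expr0; ring | lia].
  + right; exists 4%N, (-3 - 10 * (-4)^+x); split; [rewrite !exprS !expr0; ring | lia].
- right; exists 2%N, (42 + 170 * (-4)^+x); split; [rewrite !exprS !expr0; ring | lia].
- right; exists 2%N, (42 * (-4)^+x - 168 * (-4)^+y - 512 * (-4)^+x * (-4)^+y);
  split; [rewrite !exprS !expr0; ring | lia].
Qed.

Lemma oddsgn n (t : int) : exists q, (-1)^+n * (425 + 4*t) = 2*q+1.
Proof.
rewrite -signr_odd; case: (odd n).
- by exists (-213 - 2*t); rewrite expr1; ring.
- by exists (212 + 2*t); rewrite expr0; ring.
Qed.

Lemma e64 j : (64 : int)^+j = 2^+(6*j).
Proof. by rewrite exprM. Qed.

Lemma split2 n k (t : int) : (-2)^+n * 64^+k * (425 + 4*64^+k*t) =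
  2^+(n + 6*k) * ((-1)^+n * (425 + 4 * (64^+k * t))).
Proof.
have -> : (-2 : int)^+n = (-1)^+n * 2^+n by rewrite -exprMn mulN1r.
rewrite exprD e64; ring.
Qed.

Lemma core x y k m k1 : (1 <= m)%N ->
  (-2)^+(x+y) * 64^+k * (425 + 4 * 64^+k * II x y) =
  (-2)^+(m+1) * 64^+k1 * (425 + 4 * 64^+k1 * II m 1) ->
  k = k1 /\ ((x = 1 /\ y = m) \/ (x = m /\ y = 1))%N.
Proof.
move=> hm E.
rewrite !split2 in E.
have [q1 hq1] := oddsgn (x+y) (64^+k * II x y).
have [q2 hq2] := oddsgn (m+1) (64^+k1 * II m 1).
have hv : (x + y + 6 * k = m + 1 + 6 * k1)%N.
  by apply: (VAL (q1 := q1) (q2 := q2)); rewrite -hq1 -hq2.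
rewrite hv in E.
move/(mulfI (expf_neq0 _ (isT : (2:int) != 0))): E => E.
have ho : odd (x + y) = odd (m + 1).
  have := congr1 odd hv; rewrite (oddD (x+y)) (oddD (m+1)) !oddM /= !addbF //.
have hs : (-1)^+(x+y) = (-1)^+(m+1) :> int by rewrite -signr_odd ho signr_odd.
rewrite hs in E.
move/(mulfI (negbT (signr_eq0 _ _))): E => /addrI /(mulfI (isT : (4:int) != 0)).
rewrite !e64 => E.
have p0 : forall j, (2:int)^+j != 0 by move=> j; exact: expf_neq0.
have o0 : forall q : int, 2 * q + 1 != 0 by move=> q; apply/eqP; lia.
case: (II_dec m 1) => [[I0 hm2]|[v' [q' [I' s']]]].
- rewrite I0 mulr0 in E; move/eqP: E; rewrite mulf_eq0 (negbTE (p0 _)) /= => /eqP Ixy.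
  case: (II_dec x y) => [[_ hxy]|[v [q [Ixy' _]]]].
    move: hv hxy hm2; clear; lia.
  exfalso; move: Ixy; rewrite Ixy' => /eqP; rewrite mulf_eq0 (negbTE (p0 v)) (negbTE (o0 q)).
  by [].
- case: (II_dec x y) => [[I0 hxy]|[v [q [I s]]]].
    move: E; rewrite I0 I' mulr0 => /eqP; rewrite eq_sym !mulf_eq0 !(negbTE (p0 _)) /=.
    by rewrite (negbTE (o0 _)).
  rewrite I I' !mulrA -!exprD in E.
  have := VAL E; move: hv s s' hm; rewrite /IIside; clear; lia.
Qed.


Local Close Scope ring_scope.


Definition beqb (u w : seq bool) := braid_eq (enc u) (enc w).
Definition lk (u w : seq bool) := link_eq (3, enc u) (3, enc w).

Lemma beqb_trans u v w : beqb u v -> beqb v w -> beqb u w.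
Proof. exact: beq_trans. Qed.
Lemma beqb_sym u w : beqb u w -> beqb w u.
Proof. exact: beq_sym. Qed.
Lemma beqb_refl u : beqb u u.
Proof. exact: beq_refl. Qed.
Lemma beqb_ctx a b u w : beqb u w -> beqb (a ++ u ++ b) (a ++ w ++ b).
Proof. by rewrite /beqb /enc !map_cat; exact: beq_ctx. Qed.
Lemma beqb_ctxl a u w : beqb u w -> beqb (a ++ u) (a ++ w).
Proof. by move=> h; have := beqb_ctx a [::] h; rewrite !cats0. Qed.
Lemma beqb_ctxr b u w : beqb u w -> beqb (u ++ b) (w ++ b).
Proof. by move=> h; exact: (beqb_ctx [::] b h). Qed.
Lemma beqb_br : beqb [:: false; true; false] [:: true; false; true].
Proof. exact: (beq_sym (beq_braid 1)). Qed.

Lemma lk_trans u v w : lk u v -> lk v w -> lk u w.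
Proof. exact: Pilot.Defs.leq_trans. Qed.
Lemma lk_sym u w : lk u w -> lk w u.
Proof. exact: Pilot.Defs.leq_sym. Qed.
Lemma lk_b u w : beqb u w -> lk u w.
Proof. by move=> h; apply: leq_braid; rewrite ?wf3_enc. Qed.
Lemma lk_conj u w : lk (u ++ w) (w ++ u).
Proof. by rewrite /lk /enc !map_cat; apply: leq_conj; rewrite ?wf3_enc. Qed.

Definition Dw := [:: true; false; true; false; true; false].
Definition Dk k := flatten (nseq (3 * k) [:: true; false]).

Lemma DkS k : Dk k.+1 = Dw ++ Dk k.
Proof. by rewrite /Dk mulnS. Qed.

Lemma gD g : beqb (g :: Dw) (Dw ++ [:: g]).
Proof.
case: g.
- apply: (@beqb_trans _ [:: true; false; true; false; false; true; false]).
    exact: (beqb_ctx [:: true] [:: false; true; false] (beqb_sym beqb_br)).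
  exact: (beqb_ctxl [:: true; false; true; false] beqb_br).
- apply: (@beqb_trans _ [:: true; false; true; true; false; true; false]).
    exact: (beqb_ctx [::] [:: true; false; true; false] beqb_br).
  apply: (@beqb_trans _ [:: true; false; true; false; true; false; false]).
    exact: (beqb_ctx [:: true; false; true] [:: false] (beqb_sym beqb_br)).
  exact: beqb_refl.
Qed.

Lemma gDk g k : beqb (g :: Dk k) (Dk k ++ [:: g]).
Proof.
elim: k => [|k IH]; first exact: beqb_refl.
rewrite DkS.
apply: (@beqb_trans _ ((Dw ++ [:: g]) ++ Dk k)).
  exact: (beqb_ctx [::] (Dk k) (gD g)).
rewrite -catA -catA.
exact: (beqb_ctxl Dw IH).
Qed.

Lemma nDk g y k : beqb (nseq y g ++ Dk k) (Dk k ++ nseq y g).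
Proof.
elim: y => [|y IH]; first by rewrite cats0; exact: beqb_refl.
rewrite /=.
apply: (@beqb_trans _ (g :: Dk k ++ nseq y g)).
  exact: (beqb_ctxl [:: g] IH).
apply: (@beqb_trans _ ((Dk k ++ [:: g]) ++ nseq y g)).
  exact: (beqb_ctx [::] (nseq y g) (gDk g k)).
by rewrite -catA; exact: beqb_refl.
Qed.

Lemma fab y : beqb (nseq y false ++ [:: true; false]) ([:: true; false] ++ nseq y true).
Proof.
elim: y => [|y IH]; first exact: beqb_refl.
rewrite /=.
apply: (@beqb_trans _ (false :: [:: true; false] ++ nseq y true)).
  exact: (beqb_ctxl [:: false] IH).
apply: (@beqb_trans _ ([:: true; false; true] ++ nseq y true)).
  exact: (beqb_ctx [::] (nseq y true) beqb_br).
exact: beqb_refl.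
Qed.

Lemma nseq_consr n (g : bool) l : nseq n g ++ g :: l = g :: nseq n g ++ l.
Proof. by elim: n => [|n IH] //=; rewrite IH. Qed.

Lemma L1 x y k : lk (wb x y (3 * k).+1) (wb (x + y) 0 (3 * k).+1).
Proof.
rewrite /wb /= -/(Dk k).
apply: (@lk_trans _ (nseq x true ++ [:: true; false] ++ nseq y true ++ Dk k)).
  apply: lk_b.
  rewrite (_ : nseq y false ++ true :: false :: Dk k = (nseq y false ++ [:: true; false]) ++ Dk k); last by rewrite -catA.
  rewrite (_ : [:: true; false] ++ nseq y true ++ Dk k = ([:: true; false] ++ nseq y true) ++ Dk k); last by rewrite catA.
  exact: (beqb_ctx (nseq x true) (Dk k) (fab y)).
apply: (@lk_trans _ ((nseq x true ++ [:: true; false] ++ Dk k) ++ nseq y true)).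
  apply: lk_b; rewrite -!catA.
  exact: (beqb_ctxl (nseq x true) (beqb_ctxl [:: true; false] (nDk true y k))).
apply: (lk_trans (lk_conj _ _)).
rewrite addnC nseqD -!catA; exact: leq_braid (wf3_enc _) (wf3_enc _) (beq_refl _).
Qed.

Lemma L2 n k : lk (wb 0 n (3 * k).+1) (wb 1 n.+1 (3 * k)).
Proof.
rewrite /wb /= -/(Dk k).
apply: (@lk_trans _ ((true :: false :: Dk k) ++ nseq n false)).
  exact: (lk_conj (nseq n false) (true :: false :: Dk k)).
apply: lk_b.
rewrite (_ : true :: false :: nseq n false ++ Dk k = [:: true; false] ++ (nseq n false ++ Dk k) ++ [::]); last by rewrite cats0.
rewrite (_ : (true :: false :: Dk k) ++ nseq n false = [:: true; false] ++ (Dk k ++ nseq n false) ++ [::]); last by rewrite cats0.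
exact: (beqb_ctx _ _ (beqb_sym (nDk false n k))).
Qed.

Lemma L3 n k : wb n 0 (3 * k).+1 = wb n.+1 1 (3 * k).
Proof. by rewrite /wb /= nseq_consr. Qed.

Lemma bw3E x y z : bw3 x y z = enc (wb x y z).
Proof.
rewrite /bw3 /wb /enc !map_cat !map_nseq; congr (_ ++ (_ ++ _)).
by elim: z => [|z IH] //=; rewrite IH.
Qed.


Unset Implicit Arguments.


Lemma V_lk (V : nat -> bword -> LPoly) (HV : jones_axioms V) u w :
  lk u w -> V 3 (enc u) = V 3 (enc w).
Proof. by case: HV => Hl _ _; move/Hl. Qed.

Lemma Fcl (V : nat -> bword -> LPoly) (HV : jones_axioms V) x y k m k1 :
  V 3 (enc (wb x y (3*k))) = V 3 (enc (wb m 1 (3*k1))) -> (1 <= m)%N ->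
  k = k1 /\ ((x = 1 /\ y = m) \/ (x = m /\ y = 1)).
Proof.
move=> E hm; have := V_eq_int HV E => /(congr1 (fun t => (25 * t)%R)).
rewrite !Fw_closed; exact: core.
Qed.

Lemma lk_refl u : lk u u.
Proof. apply: lk_b; exact: beqb_refl. Qed.

Lemma part5 x1 y1 k : lk (wb x1 y1 (3*k).+1) (wb (x1+y1).+1 1 (3*k)).
Proof. rewrite -L3; exact: L1. Qed.

Lemma zdec1 z : z %% 3 = 1 -> exists k, z = (3 * k).+1.
Proof. move=> h; exists (z %/ 3); rewrite {1}(divn_eq z 3) h; lia. Qed.
Lemma zdec0 z : z %% 3 = 0 -> exists k, z = 3 * k.
Proof. move=> h; exists (z %/ 3); rewrite {1}(divn_eq z 3) h; lia. Qed.

Theorem proposition2p20 (V : nat -> bword -> LPoly) (HV : jones_axioms V)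
  (x1 y1 z1 x2 y2 z2 x y z : nat) :
  z1 %% 3 = 1 -> z2 %% 3 = 1 -> z %% 3 = 0 ->
  [/\ (V 3 (bw3 x1 y1 z1) = V 3 (bw3 x2 y2 z2) -> z1 = z2 /\ x1 + y1 = x2 + y2),
      (z1 = z2 /\ x1 + y1 = x2 + y2 -> link_eq (3, bw3 x1 y1 z1) (3, bw3 x2 y2 z2)),
      (V 3 (bw3 x1 y1 z1) = V 3 (bw3 x y z) ->
         ((x = 1 /\ y = (1 + x1 + y1)) \/ (x = (1 + x1 + y1) /\ y = 1)) /\ z + 1 = z1),
      ((((x = 1 /\ y = (1 + x1 + y1)) \/ (x = (1 + x1 + y1) /\ y = 1)) /\ z + 1 = z1) ->
         link_eq (3, bw3 x1 y1 z1) (3, bw3 x y z)) &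
      link_eq (3, bw3 x1 y1 z1) (3, bw3 (1 + x1 + y1) 1 (z1 - 1))].
Proof.
move=> /zdec1 [k1 ->] /zdec1 [k2 ->] /zdec0 [k ->].
rewrite !bw3E.
have P1 := part5 x1 y1 k1; have P2 := part5 x2 y2 k2.
split.
- move=> E.
  have E' : V 3 (enc (wb (x2+y2).+1 1 (3*k2))) = V 3 (enc (wb (x1+y1).+1 1 (3*k1))).
    by rewrite -(V_lk _ HV _ _ P1) -(V_lk _ HV _ _ P2) E.
  have [hk hxy] := Fcl _ HV _ _ _ _ _ E' (isT : (0 < (x1+y1).+1)%N).
  lia.
- move=> [hz hn].
  have hk : k1 = k2 by lia.
  subst k2.
  apply: (lk_trans (L1 x1 y1 k1)); rewrite hn; apply: lk_sym; exact: L1.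
- move=> E.
  have E' : V 3 (enc (wb x y (3*k))) = V 3 (enc (wb (x1+y1).+1 1 (3*k1))).
    by rewrite -(V_lk _ HV _ _ P1) E.
  have [hk hxy] := Fcl _ HV _ _ _ _ _ E' (isT : (0 < (x1+y1).+1)%N).
  lia.
- move=> [hxy hz].
  have hk : k = k1 by lia.
  subst k.
  case: hxy => [[hx hy]|[hx hy]].
  + rewrite hx hy.
    apply: (lk_trans (L1 x1 y1 k1)).
    apply: (lk_trans (lk_sym (L1 0 (x1+y1) k1))).
    rewrite (_ : (1 + x1 + y1 = (x1 + y1).+1)%N); last by lia.
    exact: L2.
  + rewrite hx hy (_ : (1 + x1 + y1 = (x1 + y1).+1)%N); last by lia.
    exact: P1.
- rewrite subn1 (_ : (1 + x1 + y1 = (x1 + y1).+1)%N); last by lia.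
  exact: P1.
Qed.
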